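(* Let $\mathcal{W}\subseteq\{x\in\mathbb{R}^d:\|x\|_2\le 1\}$ be closed and convex with $0\in\mathcal{W}$, let $L>0$, and let $f_1,\dots,f_T$ be convex differentiable functions whose gradients are $L$-Lipschitz on $\mathcal{W}$: $\|\nabla f_t(x)-\nabla f_t(x')\|_2\le L\|x-x'\|_2$. Set $f_0\equiv 0$ and $z_0=0$, fix $\eta\in(0,1]$, and for $t=1,\dots,T$ define $$x_t=\arg\min_{x\in\mathcal{W}}\Bigl\{\langle x,\nabla f_{t-1}(z_{t-1})\rangle+\tfrac{L}{2\eta}\|x-z_{t-1}\|_2^2\Bigr\},\qquad z_t=\arg\min_{x\in\mathcal{W}}\Bigl\{\Bigl\langle x,\sum_{\tau=1}^t\nabla f_\tau(z_{\tau-1})\Bigr\rangle+\tfrac{L}{2\eta}\|x\|_2^2\Bigr\}.$$ Then $$\sum_{t=1}^T f_t(x_t)\le\min_{x\in\mathcal{W}}\Bigl[\tfrac{L}{2\eta}\|x\|_2^2+\sum_{t=1}^T\bigl(f_t(z_{t-1})+\langle x-z_{t-1},\nabla f_t(z_{t-1})\rangle\bigr)\Bigr]+\frac{\eta}{2L}\sum_{t=0}^{T-1}\|\nabla f_{t+1}(z_t)-\nabla f_t(z_t)\|_2^2.$$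
   Context: The iterates $x_t$ (decisions) and $z_t$ (search points) constitute the ''improved follow-the-regularized-leader'' (IFTRL) algorithm for online convex optimization: $x_t$ is played before $f_t$ is revealed, then $z_t$ is computed. *)

(* Defs.v *)
From Stdlib Require Import Reals.
From mathcomp Require Import all_boot.
Set Implicit Arguments. Unset Strict Implicit.

Local Open Scope R_scope.

Definition vec (d : nat) := 'I_d -> R.

Definition vzero (d : nat) : vec d := fun _ => 0.
Arguments vzero d _ : clear implicits.
Definition vadd d (x y : vec d) : vec d := fun i => x i + y i.
Definition vsub d (x y : vec d) : vec d := fun i => x i - y i.
Definition vscale d (a : R) (x : vec d) : vec d := fun i => a * x i.

Definition dot d (x y : vec d) : R := \big[Rplus/0]_(i < d) (x i * y i).
Definition normsq d (x : vec d) : R := dot x x.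
Definition norm2 d (x : vec d) : R := sqrt (normsq x).

Definition vclosed_set d (W : vec d -> Prop) : Prop :=
  forall x, (forall eps, 0 < eps -> exists w, W w /\ norm2 (vsub x w) < eps) -> W x.

Definition vconvex_set d (W : vec d -> Prop) : Prop :=
  forall x y (l : R), W x -> W y -> 0 <= l <= 1 ->
    W (vadd (vscale l x) (vscale (1 - l) y)).

Definition convex_fun d (f : vec d -> R) : Prop :=
  forall x y (l : R), 0 <= l <= 1 ->
    f (vadd (vscale l x) (vscale (1 - l) y)) <= l * f x + (1 - l) * f y.

Definition has_gradient_at d (f : vec d -> R) (x g : vec d) : Prop :=
  forall eps, 0 < eps -> exists delta, 0 < delta /\
    forall h, norm2 h < delta ->
      Rabs (f (vadd x h) - f x - dot g h) <= eps * norm2 h.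

Definition is_gradient d (f : vec d -> R) (gradf : vec d -> vec d) : Prop :=
  forall x, has_gradient_at f x (gradf x).

Definition is_argmin d (W : vec d -> Prop) (phi : vec d -> R) (x : vec d) : Prop :=
  W x /\ forall y, W y -> phi x <= phi y.

Definition rsum (m n : nat) (F : nat -> R) : R := \big[Rplus/0]_(m <= t < n) F t.

(* Main.v *)
Require Import Defs.
From Stdlib Require Import Reals Lra Psatz FunctionalExtensionality.
From HB Require Import structures.
From mathcomp Require Import all_boot.
Local Open Scope R_scope.

HB.instance Definition _ := Monoid.isComLaw.Build R 0 Rplus (fun a b c => esym (Rplus_assoc a b c)) Rplus_comm Rplus_0_l.

Section Sums.
Variable d : nat.
Lemma S_ext (F G : 'I_d -> R) : (forall i, F i = G i) ->
  \big[Rplus/0]_(i < d) F i = \big[Rplus/0]_(i < d) G i.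
Proof. by move=> H; apply: eq_bigr => i _. Qed.
Lemma S_add (F G : 'I_d -> R) :
  \big[Rplus/0]_(i < d) (F i + G i) = \big[Rplus/0]_(i < d) F i + \big[Rplus/0]_(i < d) G i.
Proof. apply: (big_rec3 (fun a b c => a = b + c)) => [|i a b c _ ->]; lra. Qed.
Lemma S_sub (F G : 'I_d -> R) :
  \big[Rplus/0]_(i < d) (F i - G i) = \big[Rplus/0]_(i < d) F i - \big[Rplus/0]_(i < d) G i.
Proof. apply: (big_rec3 (fun a b c => a = b - c)) => [|i a b c _ ->]; lra. Qed.
Lemma S_scale (c : R) (F : 'I_d -> R) :
  \big[Rplus/0]_(i < d) (c * F i) = c * \big[Rplus/0]_(i < d) F i.
Proof. apply: (big_rec2 (fun a b => a = c * b)) => [|i a b _ ->]; ring. Qed.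
Lemma S_le (F G : 'I_d -> R) : (forall i, F i <= G i) ->
  \big[Rplus/0]_(i < d) F i <= \big[Rplus/0]_(i < d) G i.
Proof. move=> H; apply: (big_rec2 (fun a b => a <= b)) => [|i a b _ h]; [lra|]. have:=H i; lra. Qed.
End Sums.

Ltac sumify := rewrite /dot /normsq; rewrite -?S_scale -?S_add -?S_sub -?S_scale -?S_add -?S_sub.

Lemma normsq_ge0 d (x : vec d) : 0 <= normsq x.
Proof. rewrite /normsq /dot. apply: (big_rec (fun a => 0 <= a)) => [|i a _ h]; [lra|]; have := Rle_0_sqr (x i); rewrite /Rsqr; lra. Qed.

Arguments normsq_ge0 {d}.

Lemma amgm d (a b : vec d) (mu : R) : 0 < mu ->
  dot a b <= mu / 2 * normsq a + 1 / (2 * mu) * normsq b.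
Proof.
move=> hmu. rewrite /normsq /dot -!S_scale -S_add. apply: S_le => i.
have h : 0 <= ((mu * a i - b i) * (mu * a i - b i)) / (2 * mu).
  apply: Rle_mult_inv_pos; [apply: Rle_0_sqr| lra].
have -> : mu / 2 * (a i * a i) + 1 / (2 * mu) * (b i * b i) = a i * b i + ((mu * a i - b i) * (mu * a i - b i)) / (2 * mu) by field; lra.
lra.
Qed.

Ltac sumeq := rewrite /dot /normsq;
  do ?[rewrite -S_scale|rewrite -S_add|rewrite -S_sub]; apply: S_ext => i;
  rewrite /vadd /vscale /vsub /vzero; ring.

Lemma lin_quad (A B : R) : 0 <= B -> (forall l, 0 < l <= 1 -> 0 <= l * A + l * l * B) -> 0 <= A.
Proof.
move=> hB H. case: (Rle_lt_dec 0 A) => // hA.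
have hden : 0 < 2 * B - A by lra.
set l := - A / (2 * B - A).
have hl0 : 0 < l by rewrite /l; apply: Rdiv_lt_0_compat; lra.
have hl1 : l <= 1.
  rewrite /l /Rdiv; apply: (Rmult_le_reg_r (2*B-A)) => //; rewrite Rmult_assoc Rinv_l; lra.
have := H l (conj hl0 hl1).
have -> : l * A + l * l * B = l * (A * (B - A) / (2 * B - A)).
  rewrite /l; field; lra.
move=> h.
have h2 : 0 <= A * (B - A) / (2 * B - A).
  apply: (Rmult_le_reg_l l) => //; lra.
have h3 : A * (B - A) / (2 * B - A) < 0.
  apply: Rdiv_neg_pos => //. have : 0 < B - A by lra. move=> hh.
  have := Rmult_lt_compat_r (B - A) A 0 hh hA. lra.
lra.
Qed.

Lemma sc d (W : vec d -> Prop) (c p m y : vec d) (k : R) :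
  vconvex_set W -> 0 < k ->
  is_argmin W (fun w => dot w c + k * normsq (vsub w p)) m -> W y ->
  dot m c + k * normsq (vsub m p) + k * normsq (vsub y m) <= dot y c + k * normsq (vsub y p).
Proof.
move=> hW hk [hm hmin] hy.
set A := dot (vsub y m) c + 2 * k * dot (vsub m p) (vsub y m).
set B := k * normsq (vsub y m).
have hB : 0 <= B by rewrite /B; apply: Rmult_le_pos; [lra| apply: normsq_ge0].
have e1 : forall l, dot (vadd (vscale l y) (vscale (1 - l) m)) c
     + k * normsq (vsub (vadd (vscale l y) (vscale (1 - l) m)) p)
     - (dot m c + k * normsq (vsub m p)) = l * A + l * l * B.
  move=> l; rewrite /A /B; sumeq.
have e2 : dot y c + k * normsq (vsub y p) - (dot m c + k * normsq (vsub m p)) = A + B.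
  rewrite /A /B; sumeq.
clearbody A B.
have hA : 0 <= A.
  apply: (lin_quad A B hB) => l hl.
  have := hmin _ (hW y m l hy hm (conj (Rlt_le _ _ (proj1 hl)) (proj2 hl))).
  have := e1 l. lra.
lra.
Qed.

Lemma norm2_scale d (s : R) (h : vec d) : norm2 (vscale s h) = Rabs s * norm2 h.
Proof.
rewrite /norm2.
have -> : normsq (vscale s h) = Rsqr s * normsq h by rewrite /Rsqr; sumeq.
rewrite sqrt_mult ?sqrt_Rsqr_abs //; [apply: Rle_0_sqr | apply: normsq_ge0].
Qed.

Lemma deriv_line d (f : vec d -> R) (gf : vec d -> vec d) (u h : vec d) (s : R) :
  is_gradient f gf ->
  derivable_pt_lim (fun s => f (vadd u (vscale s h))) s (dot (gf (vadd u (vscale s h))) h).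
Proof.
move=> Hg eps heps.
set p := vadd u (vscale s h).
set n := norm2 h.
have hn : 0 <= n by apply: sqrt_pos.
set eps' := eps / (2 * (n + 1)).
have heps' : 0 < eps' by rewrite /eps'; apply: Rdiv_lt_0_compat; lra.
have [delta [hdelta Hd]] := Hg p eps' heps'.
have hdp : 0 < delta / (n + 1) by apply: Rdiv_lt_0_compat; lra.
exists (mkposreal _ hdp) => /= del hdel0 hdel.
have habs : 0 < Rabs del by apply: Rabs_pos_lt.
have eq1 : vadd u (vscale (s + del) h) = vadd p (vscale del h).
  apply: functional_extensionality => i; rewrite /p /vadd /vscale; ring.
have hnd : norm2 (vscale del h) < delta.
  rewrite norm2_scale -/n.
  have : Rabs del * (n + 1) < delta.
    have := Rmult_lt_compat_r (n + 1) _ _ ltac:(lra) hdel.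
    rewrite /Rdiv Rmult_assoc Rinv_l; lra.
  have : Rabs del * n <= Rabs del * (n + 1) by apply: Rmult_le_compat_l; lra.
  lra.
have H1 := Hd _ hnd.
rewrite -eq1 norm2_scale -/n in H1.
have eqd : dot (gf p) (vscale del h) = del * dot (gf p) h by sumeq.
rewrite eqd in H1.
have -> : (f (vadd u (vscale (s + del) h)) - f p) / del - dot (gf p) h
   = (f (vadd u (vscale (s + del) h)) - f p - del * dot (gf p) h) * / del by field.
rewrite Rabs_mult Rabs_inv.
set N := Rabs _ in H1 *.
have h2 : N * / Rabs del <= eps' * n.
  apply: (Rmult_le_reg_r (Rabs del)) => //.
  rewrite Rmult_assoc Rinv_l; lra.
have h3 : eps' * n < eps.
  have : eps' * n <= eps' * (n + 1) by apply: Rmult_le_compat_l; lra.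
  have -> : eps' * (n + 1) = eps / 2 by rewrite /eps'; field; lra.
  lra.
lra.
Qed.

Lemma normsq_of_norm2 d (a b : vec d) (L : R) : 0 <= L ->
  norm2 a <= L * norm2 b -> normsq a <= L * L * normsq b.
Proof.
move=> hL h.
have ha := sqrt_sqrt _ (normsq_ge0 a).
have hb := sqrt_sqrt _ (normsq_ge0 b).
have h0 : 0 <= norm2 a by apply: sqrt_pos.
rewrite /norm2 in h h0.
rewrite -ha -hb.
have : sqrt (normsq a) * sqrt (normsq a) <= (L * sqrt (normsq b)) * (L * sqrt (normsq b)).
  by apply: Rmult_le_compat.
lra.
Qed.

Lemma descent d (W : vec d -> Prop) (f : vec d -> R) (gf : vec d -> vec d) (L : R) (u v : vec d) :
  vconvex_set W -> 0 < L -> is_gradient f gf ->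
  (forall a b, W a -> W b -> norm2 (vsub (gf a) (gf b)) <= L * norm2 (vsub a b)) ->
  W u -> W v ->
  f v <= f u + dot (vsub v u) (gf u) + L / 2 * normsq (vsub v u).
Proof.
move=> hW hL Hg Hlip hu hv.
set h := vsub v u.
set a := dot h (gf u).
set b := normsq h.
set p := fun s => vadd u (vscale s h).
set F := fun s => f (p s).
set phi := fun s => F s - (s * a + L / 2 * (s * s) * b).
set phi' := fun s => dot (gf (p s)) h - (a + L * s * b).
have Hd : forall c, 0 <= c <= 1 -> derivable_pt_lim phi c (phi' c).
  move=> c _.
  have D1 := deriv_line _ f gf u h c Hg.
  have D2 := derivable_pt_lim_plus _ _ c _ _ (derivable_pt_lim_scal id a c _ (derivable_pt_lim_id c))
     (derivable_pt_lim_scal Rsqr (L / 2 * b) c _ (derivable_pt_lim_Rsqr c)).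
  have D3 := derivable_pt_lim_minus _ _ c _ _ D1 D2.
  have E : dot (gf (vadd u (vscale c h))) h - (a * 1 + L / 2 * b * (2 * c)) = phi' c.
    rewrite /phi' /p /=; field.
  rewrite E in D3.
  apply: (derivable_pt_lim_ext _ _ _ _ _ D3) => z.
  rewrite /minus_fct /plus_fct /mult_real_fct /id /Rsqr /phi /F /p /=; field.
have [c [Ec [hc0 hc1]]] := MVT_cor2 phi phi' 0 1 Rlt_0_1 Hd.
have p1 : p 1 = v by apply: functional_extensionality => i; rewrite /p /vadd /vscale /h /vsub; ring.
have p0 : p 0 = u by apply: functional_extensionality => i; rewrite /p /vadd /vscale /h /vsub; ring.
have hpc : W (p c).
  have -> : p c = vadd (vscale c v) (vscale (1 - c) u).
    by apply: functional_extensionality => i; rewrite /p /vadd /vscale /h /vsub; ring.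
  apply: hW => //; lra.
have hLc : 0 < L * c by apply: Rmult_lt_0_compat.
have e1 : dot (gf (p c)) h - a = dot h (vsub (gf (p c)) (gf u)) by rewrite /a; sumeq.
have e2 : normsq (vsub (p c) u) = c * c * b by rewrite /b /p /h; sumeq.
have i1 := amgm _ h (vsub (gf (p c)) (gf u)) (L * c) hLc.
have i2 := normsq_of_norm2 _ _ _ L (Rlt_le _ _ hL) (Hlip _ _ hpc hu).
rewrite e2 in i2.
have i3 : 1 / (2 * (L * c)) * normsq (vsub (gf (p c)) (gf u)) <= 1 / (2 * (L * c)) * (L * L * (c * c * b)).
  apply: Rmult_le_compat_l => //. apply: Rlt_le; apply: Rdiv_lt_0_compat; lra.
have e3 : 1 / (2 * (L * c)) * (L * L * (c * c * b)) = L * c / 2 * b by field; lra.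
have hphi' : phi' c <= 0.
  rewrite /phi' /=. rewrite -/b -/h in i1. lra.
have : phi 1 - phi 0 <= 0 by rewrite Ec; lra.
rewrite /phi /F /= p1 p0. lra.
Qed.

Lemma sc0 d (W : vec d -> Prop) (c m y : vec d) (k : R) :
  vconvex_set W -> 0 < k ->
  is_argmin W (fun w => dot w c + k * normsq w) m -> W y ->
  dot m c + k * normsq m + k * normsq (vsub y m) <= dot y c + k * normsq y.
Proof.
move=> hW hk hm hy.
have e : forall w : vec d, normsq (vsub w (vzero d)) = normsq w by move=> w; rewrite /normsq /dot; apply: S_ext => i; rewrite /vsub /vzero; ring.
have hm' : is_argmin W (fun w => dot w c + k * normsq (vsub w (vzero d))) m.
  have -> : (fun w => dot w c + k * normsq (vsub w (vzero d))) = (fun w => dot w c + k * normsq w).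
    by apply: functional_extensionality => w; rewrite e.
  exact: hm.
have := sc _ W c (vzero d) m y k hW hk hm' hy. by rewrite !e.
Qed.

Theorem mainTheorem2
  (d : nat) (W : vec d -> Prop) (L eta : R) (T : nat)
  (f : nat -> vec d -> R) (gradf : nat -> vec d -> vec d)
  (x z : nat -> vec d)
  (HWclosed : vclosed_set W) (HWconvex : vconvex_set W)
  (HWball : forall w, W w -> norm2 w <= 1)
  (HW0 : W (vzero d))
  (HL : 0 < L)
  (Heta : 0 < eta <= 1)
  (Hf0 : forall v, f 0%nat v = 0)
  (Hconv : forall t, (1 <= t <= T)%nat -> convex_fun (f t))
  (Hgrad : forall t, (t <= T)%nat -> is_gradient (f t) (gradf t))
  (Hlip : forall t, (1 <= t <= T)%nat -> forall u v, W u -> W v ->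
     norm2 (vsub (gradf t u) (gradf t v)) <= L * norm2 (vsub u v))
  (Hz0 : z 0%nat = vzero d)
  (Hx : forall t, (1 <= t <= T)%nat ->
     is_argmin W (fun w => dot w (gradf (t - 1)%nat (z (t - 1)%nat))
                           + L / (2 * eta) * normsq (vsub w (z (t - 1)%nat))) (x t))
  (Hz : forall t, (1 <= t <= T)%nat ->
     is_argmin W (fun w => dot w (fun i => rsum 1 t.+1 (fun tau => gradf tau (z (tau - 1)%nat) i))
                           + L / (2 * eta) * normsq w) (z t)) :
  forall w, W w ->
    rsum 1 T.+1 (fun t => f t (x t))
    <= L / (2 * eta) * normsq w
       + rsum 1 T.+1 (fun t => f t (z (t - 1)%nat)
                              + dot (vsub w (z (t - 1)%nat)) (gradf t (z (t - 1)%nat)))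
       + eta / (2 * L) * rsum 0 T (fun t => normsq (vsub (gradf t.+1 (z t)) (gradf t (z t)))).
Proof.
move=> w hw.
have hk : 0 < L / (2 * eta) by apply: Rdiv_lt_0_compat; lra.
have hkL : L / 2 <= L / (2 * eta).
  rewrite /Rdiv; apply: Rmult_le_compat_l; first lra.
  apply: Rinv_le_contravar; lra.
set k := L / (2 * eta) in hk hkL Hx Hz *.
set Gs := fun t => (fun i => rsum 1 t.+1 (fun tau => gradf tau (z (tau - 1)%nat) i)) : vec d.
set Phi := fun t (y : vec d) => dot y (Gs t) + k * normsq y.
set U := fun t => Phi t (z t) - dot w (Gs t).
have G0 : forall y : vec d, dot y (Gs 0%nat) = 0.
  move=> y; rewrite /dot; apply: (big_rec (fun a => a = 0)) => // i a _ ->.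
  rewrite /Gs /rsum big_geq //; ring.
have GS : forall n (y : vec d), dot y (Gs n.+1) = dot y (Gs n) + dot y (gradf n.+1 (z n)).
  move=> n y; rewrite /dot -S_add; apply: S_ext => i.
  rewrite /Gs /rsum big_nat_recr //= subn1 /=; ring.
have Wz : forall s, (s <= T)%nat -> W (z s).
  case=> [|s] hs; first by rewrite Hz0.
  by case: (Hz s.+1 hs).
have SCz : forall s, (s <= T)%nat -> forall y, W y -> Phi s (z s) + k * normsq (vsub y (z s)) <= Phi s y.
  case=> [|s] hs y hy.
    rewrite /Phi !G0 Hz0.
    have e1 : normsq (vzero d) = 0 by rewrite /normsq /dot; apply: (big_rec (fun a => a = 0)) => // i a _ ->; rewrite /vzero; ring.
    have e2 : normsq (vsub y (vzero d)) = normsq y by rewrite /normsq /dot; apply: S_ext => i; rewrite /vsub /vzero; ring.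
    rewrite e1 e2; lra.
  have := sc0 _ W (Gs s.+1) (z s.+1) y k HWconvex hk (Hz s.+1 hs) hy.
  rewrite /Phi; lra.
have Step : forall n, (n < T)%nat ->
    f n.+1 (x n.+1) - (f n.+1 (z n) + dot (vsub w (z n)) (gradf n.+1 (z n)))
    <= eta / (2 * L) * normsq (vsub (gradf n.+1 (z n)) (gradf n (z n))) + (U n.+1 - U n).
  move=> n hn.
  have hx : is_argmin W (fun v => dot v (gradf n (z n)) + k * normsq (vsub v (z n))) (x n.+1).
    by have := Hx n.+1 hn; rewrite subSS subn0.
  set zp := z n in hx *; set zt := z n.+1; set xt := x n.+1 in hx *.
  set g := gradf n.+1 zp; set m := gradf n zp.
  have hzp : W zp := Wz n (ltnW hn).
  have hzt : W zt := Wz n.+1 hn.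
  have ia := descent _ W (f n.+1) (gradf n.+1) L zp xt HWconvex HL (Hgrad n.+1 hn) (Hlip n.+1 hn) hzp (proj1 hx).
  have ib := sc _ W m zp xt zt k HWconvex hk hx hzt.
  have ic := amgm _ (vsub xt zt) (vsub g m) (2 * k) ltac:(lra).
  have id := SCz n (ltnW hn) zt hzt.
  have ie : Phi n.+1 zt = Phi n zt + dot zt g .
    rewrite /Phi /= GS /g /zp; ring.
  have ig : dot w (Gs n.+1) = dot w (Gs n) + dot w g by rewrite GS /g /zp.
  have lin : dot (vsub xt zp) g - dot (vsub w zp) g
     = dot (vsub xt zt) (vsub g m) + dot xt m - dot zt m + dot zt g - dot w g by sumeq.
  have sym : normsq (vsub zt xt) = normsq (vsub xt zt) by sumeq.
  have ck : 1 / (2 * (2 * k)) = eta / (2 * L) by rewrite /k; field; lra.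
  have q : L / 2 * normsq (vsub xt zp) <= k * normsq (vsub xt zp).
    apply: Rmult_le_compat_r => //; apply: normsq_ge0.
  rewrite ck in ic; rewrite sym in ib.
  rewrite /U ie ig -/zt -/zp.
  have e2 : 2 * k / 2 = k by field.
  rewrite e2 in ic.
  rewrite -/g in ia; rewrite -/zp in id.
  lra.
have Ind : forall n, (n <= T)%nat ->
    rsum 1 n.+1 (fun t => f t (x t)) <=
    rsum 1 n.+1 (fun t => f t (z (t - 1)%nat)
                              + dot (vsub w (z (t - 1)%nat)) (gradf t (z (t - 1)%nat)))
    + eta / (2 * L) * rsum 0 n (fun t => normsq (vsub (gradf t.+1 (z t)) (gradf t (z t))))
    + U n.
  elim=> [|n IH] hn.
    rewrite /rsum !big_geq // /U /Phi G0 G0 Hz0.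
    have e1 : normsq (vzero d) = 0 by rewrite /normsq /dot; apply: (big_rec (fun a => a = 0)) => // i a _ ->; rewrite /vzero; ring.
    rewrite e1; lra.
  have IH' := IH (ltnW hn).
  have St := Step n hn.
  rewrite /rsum big_nat_recr // [X in _ <= X + _ + _]big_nat_recr // [X in _ <= _ + _ * X + _]big_nat_recr //=.
  rewrite subSS subn0.
  rewrite /rsum in IH'.
  lra.
have hT := Ind T (leqnn T).
have hU : U T <= k * normsq w.
  have := SCz T (leqnn T) w hw.
  have := normsq_ge0 (vsub w (z T)).
  have : 0 <= k * normsq (vsub w (z T)) by apply: Rmult_le_pos; [lra | apply: normsq_ge0].
  rewrite /U /Phi /=. lra.
lra.
Qed.
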